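(* With $\bar X$, $\bar s$, $\bar G$, $\bar C$ as below, let $\varphi:\bar X\to\mathbb{R}$ be continuous, let $\bar\varphi$ be the filtering function on $\bar C$ induced by $\varphi$, and let $\varphi':S^2\to\mathbb{R}$, $\varphi'(x_1,x_2,x_3)=\max\{\varphi(x_1,x_2,x_3,1),\varphi(x_1,x_2,x_3,-1)\}$. Then for every $n$ the persistent Betti number function $\rho^{\bar\varphi}_n$ of the $\bar G$-chain complex $\bar C$ equals the classical persistent Betti number function $\rho^{\varphi'}_n$ of $\varphi'$ on $S^2$ (singular homology of sublevel sets over $\mathbb{K}$).
   Context: $\bar X=X_+\cup X_-\subset\mathbb{R}^4$ with $X_\pm=\{(x_1,x_2,x_3,x_4):x_1^2+x_2^2+x_3^2=1,\ x_4=\pm1\}$; $\bar s(x_1,x_2,x_3,x_4)=(x_1,x_2,x_3,-x_4)$; $\bar G$ is the group of maps $(x_1,x_2,x_3,x_4)\mapsto(\tilde g(x_1,x_2,x_3),x_4)$ with $\tilde g$ an isometry of $S^2$; $\bar C\subseteq S(\bar X)$ is the subcomplex of chains of the form $\sum_r a^r(\sigma_{j_r}+\bar s\circ\sigma_{j_r})$. Induced filtering function: $\bar\varphi(0)=-\infty$; for a non-null chain in reduced form $\sum_r a^r\sigma_{j_r}$ (distinct simplices, nonzero coefficients), $\bar\varphi$ is the maximum of $\varphi$ on $\bigcup_r\sigma_{j_r}(\Delta_n)$. PBNF of $\bar C$: for $u<v$, $\rho^{\bar\varphi}_n(u,v)$ is the rank of the image of $H_n(\bar C^{\bar\varphi\le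 u})\to H_n(\bar C^{\bar\varphi\le v})$, with $\bar C^{\bar\varphi\le u}_n=\{c\in\bar C_n:\bar\varphi(c)\le u\}$. Classical PBNF: $\rho^{\varphi'}_n(u,v)$ is the rank of the image of $H_n(\{\varphi'\le u\})\to H_n(\{\varphi'\le v\})$. *)

(* Defs.v *)
From HB Require Import structures.
From mathcomp Require Import all_boot all_order all_algebra.
From mathcomp Require Import all_classical all_reals all_analysis.
Unset Printing Implicit Defensive.
Import Order.TTheory GRing.Theory Num.Theory.
Import numFieldNormedType.Exports.
Local Open Scope classical_set_scope.
Local Open Scope ring_scope.

Section Singular.
Variable R : realType.

Definition stdsimplex (n : nat) : set 'rV[R]_n.+1 :=
  [set x | (forall i, 0 <= x ord0 i) /\ \sum_(i < n.+1) x ord0 i = 1].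

(* a singular n-simplex in a subset Y of R^m.  To have canonical
   representatives, maps are normalized to be 0 outside Delta_n. *)
Definition sing_simplex (m n : nat) (Y : set 'rV[R]_m)
    (s : 'rV[R]_n.+1 -> 'rV[R]_m) : Prop :=
  [/\ {within stdsimplex n, continuous s},
      s @` stdsimplex n `<=` Y &
      forall x, ~ stdsimplex n x -> s x = 0].

Definition face_incl (n : nat) (i : 'I_n.+2) (x : 'rV[R]_n.+1) : 'rV[R]_n.+2 :=
  \row_j (if unlift i j is Some j' then x ord0 j' else 0).

Definition face (m n : nat) (s : 'rV[R]_n.+2 -> 'rV[R]_m) (i : 'I_n.+2)
  : 'rV[R]_n.+1 -> 'rV[R]_m :=
  fun x => if `[< stdsimplex n x >] then s (face_incl n i x) else 0.

Variable K : fieldType.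

Definition sing_chain (m n : nat) (Y : set 'rV[R]_m)
    (c : ('rV[R]_n.+1 -> 'rV[R]_m) -> K) : Prop :=
  finite_set [set s | c s != 0] /\ [set s | c s != 0] `<=` sing_simplex m n Y.

Definition bdry (m n : nat) (c : ('rV[R]_n.+2 -> 'rV[R]_m) -> K)
  : ('rV[R]_n.+1 -> 'rV[R]_m) -> K :=
  fun t => (\sum_(s \in [set s | c s != 0])
              c s * \sum_(i < n.+2) (-1) ^+ i * (if face m n s i == t then 1 else 0))%R.

(* a graded family of sets of chains (a subcomplex, or a filtration level) *)
Definition chains_family (m : nat) :=
  forall n : nat, set (('rV[R]_n.+1 -> 'rV[R]_m) -> K).

Definition cycles (m : nat) (A : chains_family m) (n : nat) :
    set (('rV[R]_n.+1 -> 'rV[R]_m) -> K) :=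
  match n with
  | 0 => A 0
  | n'.+1 => fun c => A n'.+1 c /\ bdry m n' c = (fun _ => 0)
  end.

Definition boundaries (m : nat) (A : chains_family m) (n : nat) :
    set (('rV[R]_n.+1 -> 'rV[R]_m) -> K) :=
  [set bdry m n d | d in A n.+1].

(* rank of the image of H_n(A) -> H_n(B) (for A a subcomplex of B) is >= k:
   there are k cycles of A whose classes are linearly independent in H_n(B). *)
Definition pbn_ge (m : nat) (A B : chains_family m) (n k : nat) : Prop :=
  exists cs : 'I_k -> (('rV[R]_n.+1 -> 'rV[R]_m) -> K),
    (forall r, cycles m A n (cs r)) /\
    forall a : 'I_k -> K,
      boundaries m B n (fun t => \sum_(r < k) a r * cs r t) ->
      forall r, a r = 0.

(* PBN equality: equal ranks (as elements of nat u {infinity}) *)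
Definition pbn_equal (m m' : nat) (A B : chains_family m) (A' B' : chains_family m')
    (n : nat) : Prop :=
  forall k, pbn_ge m A B n k <-> pbn_ge m' A' B' n k.

End Singular.

Section Spheres.
Variable R : realType.

Definition S2 : set 'rV[R]_3 :=
  [set x | x ord0 0 ^+ 2 + x ord0 1 ^+ 2 + x ord0 2 ^+ 2 = 1].

Definition ext4 (x : 'rV[R]_3) (t : R) : 'rV[R]_4 :=
  \row_(j < 4) (if j == 3 :> nat then t else x ord0 (inord j)).

Definition Xbar : set 'rV[R]_4 :=
  [set y | exists2 x, S2 x & (y = ext4 x 1 \/ y = ext4 x (-1))].

Definition sbar (y : 'rV[R]_4) : 'rV[R]_4 :=
  \row_(j < 4) (if j == 3 :> nat then - y ord0 j else y ord0 j).

Variable K : fieldType.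

Definition Cbar (n : nat) : set (('rV[R]_n.+1 -> 'rV[R]_4) -> K) :=
  [set c | exists (p : nat) (a : 'I_p -> K) (ss : 'I_p -> 'rV[R]_n.+1 -> 'rV[R]_4),
     (forall r, sing_simplex R 4 n Xbar (ss r)) /\
     c = fun t => \sum_(r < p) a r *
                   ((if ss r == t then 1 else 0) + (if sbar \o ss r == t then 1 else 0))].

(* the induced filtering function phibar: -oo on 0, else the max of phi on the
   union of the images of the simplices in the reduced form *)
Definition phibar (phi : 'rV[R]_4 -> R) (n : nat)
    (c : ('rV[R]_n.+1 -> 'rV[R]_4) -> K) : \bar R :=
  ereal_sup [set (phi (s x))%:E | s in [set s | c s != 0] & x in stdsimplex R n].

Definition Cbar_sub (phi : 'rV[R]_4 -> R) (u : R) : chains_family R K 4 :=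
  fun n => [set c | sing_chain R K 4 n Xbar c /\ Cbar n c /\ (phibar phi n c <= u%:E)%E].

Definition phi' (phi : 'rV[R]_4 -> R) (x : 'rV[R]_3) : R :=
  Num.max (phi (ext4 x 1)) (phi (ext4 x (-1))).

Definition S2_sub (f : 'rV[R]_3 -> R) (u : R) : chains_family R K 3 :=
  fun n => sing_chain R K 3 n (S2 `&` [set x | f x <= u]).

End Spheres.

(* Main.v *)
Require Import Defs.
From HB Require Import structures.
From mathcomp Require Import all_boot all_order all_algebra.
From mathcomp Require Import all_classical all_reals all_analysis.
From mathcomp Require Import ring lra.
Import Order.TTheory GRing.Theory Num.Theory.
Import numFieldNormedType.Exports.
Local Open Scope classical_set_scope.
Local Open Scope ring_scope.

Lemma mx_continuous (R : realType) (T : topologicalType) m n (f : T -> 'M[R]_(m, n)) :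
  (forall i j, continuous (fun x => f x i j)) -> continuous f.
Proof.
move=> cf x A [P Pnb PA].
have : \forall y \near x, forall i j, P i j (f y i j).
  apply: filter_forall => i; apply: filter_forall => j.
  exact: (cf i j x _ (Pnb i j)).
by apply: filterS => y Py; apply: PA.
Qed.

Section Geo.
Variable R : realType.

Definition e0 n : 'rV[R]_n.+1 := \row_(j < n.+1) (if j == 0 :> nat then 1 else 0).

Lemma e0_simplex n : stdsimplex R n (e0 n).
Proof.
split=> [i|]; first by rewrite mxE; case: ifP.
rewrite big_ord_recl mxE /= big1 ?addr0 // => i _; by rewrite mxE.
Qed.

Definition seg n (x : 'rV[R]_n.+1) (t : R) : 'rV[R]_n.+1 :=
  \row_j (e0 n ord0 j + t * (x ord0 j - e0 n ord0 j)).

Lemma seg_continuous n x : continuous (seg n x).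
Proof.
apply: mx_continuous => i j; rewrite /seg.
have -> : (fun t => (\row_j0 (e0 n ord0 j0 + t * (x ord0 j0 - e0 n ord0 j0))) i j)
   = (fun t => e0 n ord0 j + t * (x ord0 j - e0 n ord0 j)).
  by apply: funext => t; rewrite mxE.
move=> t; apply: cvgD; first exact: cvg_cst.
by apply: cvgMl; exact: cvg_id.
Qed.

Lemma seg_simplex n x t : stdsimplex R n x -> 0 <= t <= 1 ->
  stdsimplex R n (seg n x t).
Proof.
move=> [x0 x1] /andP[t0 t1]; split=> [i|].
  rewrite mxE; have -> : e0 n ord0 i + t * (x ord0 i - e0 n ord0 i)
     = (1 - t) * e0 n ord0 i + t * x ord0 i by ring.
  apply: addr_ge0; apply: mulr_ge0 => //; rewrite ?subr_ge0 //.
  by have [] := e0_simplex n; move=> h _; apply: h.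
under eq_bigr do rewrite mxE.
rewrite big_split /= -mulr_sumr sumrB x1.
by have [_ ->] := e0_simplex n; rewrite subrr mulr0 addr0.
Qed.

Lemma seg0 n x : seg n x 0 = e0 n.
Proof. by apply/rowP => j; rewrite !mxE mul0r addr0. Qed.
Lemma seg1 n x : seg n x 1 = x.
Proof. by apply/rowP => j; rewrite !mxE mul1r addrC subrK. Qed.

Lemma simplex_connected n : connected (stdsimplex R n).
Proof.
have -> : stdsimplex R n = \bigcup_(x in stdsimplex R n) (seg n x @` `[0, 1]).
  apply/seteqP; split => [x sx|y [x sx [t t01 <-]]].
    exists x => //; exists 1; last exact: seg1.
    by rewrite /= in_itv /= lexx ler01.
  by apply: seg_simplex => //; move: t01; rewrite /= in_itv.
apply: bigcup_connected.
  exists (e0 n) => x _; exists 0; last exact: seg0.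
  by rewrite /= in_itv /= lexx ler01.
move=> x _; apply: connected_continuous_connected; first exact: segment_connected.
exact/continuous_subspaceT/seg_continuous.
Qed.

End Geo.
Section Ext.
Variable R : realType.

Definition proj3 (y : 'rV[R]_4) : 'rV[R]_3 := \row_(j < 3) y ord0 (widen_ord (leqnSn 3) j).

Lemma val3 : val (3 : 'I_4) = 3%N. Proof. by []. Qed.

Lemma proj3_ext x t : proj3 (ext4 R x t) = x.
Proof.
apply/rowP => j; rewrite !mxE /=.
have -> : (j == 3 :> nat) = false by case: j => [[|[|[|]]]].
congr (x ord0 _); apply: val_inj => /=; rewrite inordK //.
Qed.

Lemma ext4_3 x t : ext4 R x t ord0 3 = t.
Proof. by rewrite mxE. Qed.

Lemma ext_proj y : y = ext4 R (proj3 y) (y ord0 3).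
Proof.
apply/rowP => j; rewrite !mxE; case: ifP => [/eqP h|h].
  by congr (y ord0 _); apply: val_inj.
congr (y ord0 _); apply: val_inj => /=; rewrite inordK //.
by case: j h => [[|[|[|[|]]]]].
Qed.

Lemma sbar_ext x t : sbar R (ext4 R x t) = ext4 R x (- t).
Proof. by apply/rowP => j; rewrite !mxE; case: ifP => h; rewrite h. Qed.

Lemma sbar0 : sbar R 0 = 0.
Proof. by apply/rowP => j; rewrite !mxE oppr0; case: ifP. Qed.

Lemma sbarK y : sbar R (sbar R y) = y.
Proof. by apply/rowP => j; rewrite !mxE; case: ifP => h; rewrite h ?opprK. Qed.

Lemma Xbar_proj y : Xbar R y -> S2 R (proj3 y) /\ (y ord0 3 = 1 \/ y ord0 3 = -1).
Proof.
by move=> [x Sx [->|->]]; rewrite proj3_ext ext4_3; split => //; [left|right].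
Qed.

Lemma Xbar_ext x t : S2 R x -> t = 1 \/ t = -1 -> Xbar R (ext4 R x t).
Proof. by move=> Sx [->|->]; exists x => //; [left|right]. Qed.

Lemma ext4_continuous t : continuous (fun x => ext4 R x t).
Proof.
apply: mx_continuous => i j.
have -> : (fun x : 'rV[R]_3 => ext4 R x t i j) =
  (fun x : 'rV[R]_3 => if j == 3 :> nat then t else x ord0 (inord j)).
  by apply: funext => x; rewrite mxE.
case: (nat_of_ord j == 3)%N; first exact: cst_continuous.
exact: coord_continuous.
Qed.

Lemma proj3_continuous : continuous proj3.
Proof.
apply: mx_continuous => i j.
have -> : (fun x : 'rV[R]_4 => proj3 x i j) = (fun x : 'rV[R]_4 => x ord0 (widen_ord (leqnSn 3) j)).
  by apply: funext => x; rewrite mxE.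
exact: coord_continuous.
Qed.

Lemma sbar_continuous : continuous (sbar R).
Proof.
apply: mx_continuous => i j.
have -> : (fun x : 'rV[R]_4 => sbar R x i j) =
  (fun x : 'rV[R]_4 => if j == 3 :> nat then - x ord0 j else x ord0 j).
  by apply: funext => x; rewrite mxE.
case: (nat_of_ord j == 3)%N; last exact: coord_continuous.
by move=> x; apply: continuousN; apply: coord_continuous.
Qed.

End Ext.

Section Chains.
Variable R : realType.
Variable K : fieldType.

Definition nrm {m n} (f : 'rV[R]_n.+1 -> 'rV[R]_m) :=
  forall x, ~ stdsimplex R n x -> f x = 0.

Definition Ee n (s : 'rV[R]_n.+1 -> 'rV[R]_3) : 'rV[R]_n.+1 -> 'rV[R]_4 :=
  fun x => if `[< stdsimplex R n x >] then ext4 R (s x) 1 else 0.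

Definition Pp n (t : 'rV[R]_n.+1 -> 'rV[R]_4) : 'rV[R]_n.+1 -> 'rV[R]_3 :=
  fun x => if `[< stdsimplex R n x >] then proj3 R (t x) else 0.

Definition ind n (t : 'rV[R]_n.+1 -> 'rV[R]_4) : K :=
  (if Ee n (Pp n t) == t then 1 else 0) +
  (if sbar R \o Ee n (Pp n t) == t then 1 else 0).

Definition Fc n (d : ('rV[R]_n.+1 -> 'rV[R]_3) -> K)
  (t : 'rV[R]_n.+1 -> 'rV[R]_4) : K := d (Pp n t) * ind n t.

Lemma nrm_Pp n t : nrm (Pp n t).
Proof. by move=> x nx; rewrite /Pp asboolF. Qed.

Lemma nrm_Ee n s : nrm (Ee n s).
Proof. by move=> x nx; rewrite /Ee asboolF. Qed.

Lemma nrm_sEe n s : nrm (sbar R \o Ee n s).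
Proof. by move=> x nx; rewrite /= nrm_Ee // sbar0. Qed.

Lemma PpEe n s : nrm s -> Pp n (Ee n s) = s.
Proof.
move=> ns; apply: funext => x; rewrite /Pp /Ee.
case: (asboolP (stdsimplex R n x)) => sx; first by rewrite proj3_ext.
by rewrite ns.
Qed.

Lemma PpsEe n s : nrm s -> Pp n (sbar R \o Ee n s) = s.
Proof.
move=> ns; apply: funext => x; rewrite /Pp /Ee /=.
case: (asboolP (stdsimplex R n x)) => sx; first by rewrite sbar_ext proj3_ext.
by rewrite ns.
Qed.

Lemma Ee_sEe n s s' : Ee n s != sbar R \o Ee n s'.
Proof.
apply/eqP => h.
have := congr1 (fun f : 'rV[R]_n.+1 -> 'rV[R]_4 => f (e0 R n) ord0 3) h.
rewrite /= /Ee asboolT; last exact: e0_simplex.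
rewrite sbar_ext !ext4_3 => h1; clear h; lra.
Qed.

Lemma eqEe n s t : nrm s ->
  (Ee n s == t) = (s == Pp n t) && (Ee n (Pp n t) == t).
Proof.
move=> ns; apply/eqP/andP => [<-|[/eqP -> /eqP //]].
by rewrite PpEe.
Qed.

Lemma eqsEe n s t : nrm s ->
  (sbar R \o Ee n s == t) = (s == Pp n t) && (sbar R \o Ee n (Pp n t) == t).
Proof.
move=> ns; apply/eqP/andP => [<-|[/eqP -> /eqP //]].
by rewrite PpsEe.
Qed.

Lemma sum_ind n s t : nrm s ->
  (if Ee n s == t then 1 else 0) + (if sbar R \o Ee n s == t then 1 else 0)
  = (if s == Pp n t then 1 else 0) * ind n t :> K.
Proof.
move=> ns; rewrite eqEe // eqsEe //.
by case: (s == Pp n t); rewrite ?mul1r ?mul0r //= addr0.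
Qed.

Lemma ind_Ee n s : nrm s -> ind n (Ee n s) = 1.
Proof.
move=> ns; rewrite /ind PpEe // eqxx.
by rewrite eq_sym (negbTE (Ee_sEe _ _ _)) addr0.
Qed.

Lemma ind_sEe n s : nrm s -> ind n (sbar R \o Ee n s) = 1.
Proof.
move=> ns; rewrite /ind PpsEe // eqxx.
by rewrite (negbTE (Ee_sEe _ _ _)) add0r.
Qed.

Lemma Fc_Ee n d s : nrm s -> Fc n d (Ee n s) = d s.
Proof. by move=> ns; rewrite /Fc ind_Ee // PpEe // mulr1. Qed.

Lemma Fc_sEe n d s : nrm s -> Fc n d (sbar R \o Ee n s) = d s.
Proof. by move=> ns; rewrite /Fc ind_sEe // PpsEe // mulr1. Qed.

Lemma ind_cases n t : ind n t != 0 ->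
  t = Ee n (Pp n t) \/ t = sbar R \o Ee n (Pp n t).
Proof.
rewrite /ind; case: (Ee n (Pp n t) =P t) => [h|_]; first by left; apply/esym.
by case: (sbar R \o Ee n (Pp n t) =P t) => [h|_]; [right; apply/esym|rewrite addr0 eqxx].
Qed.

Lemma Fc_supp n d t : Fc n d t != 0 ->
  d (Pp n t) != 0 /\ (t = Ee n (Pp n t) \/ t = sbar R \o Ee n (Pp n t)).
Proof.
rewrite /Fc mulf_eq0 negb_or => /andP[h1 h2]; split => //.
exact: ind_cases.
Qed.

End Chains.

Section Bdry.
Variable R : realType.
Variable K : fieldType.

Lemma face_incl_simplex n i x : stdsimplex R n x ->
  stdsimplex R n.+1 (face_incl R n i x).
Proof.
move=> [x0 x1]; split => [j|].
  by rewrite mxE; case: (unlift i j) => [j'|] //; apply: x0.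
rewrite (bigD1_ord i) //= mxE unlift_none add0r.
rewrite -x1; apply: eq_bigr => j _; by rewrite mxE liftK.
Qed.

Lemma face_nrm m n s i : nrm R (face R m n s i).
Proof. by move=> x nx; rewrite /face asboolF. Qed.

Lemma face_Ee n s i : face R 4 n (Ee R n.+1 s) i = Ee R n (face R 3 n s i).
Proof.
apply: funext => x; rewrite /face /Ee.
case: (asboolP (stdsimplex R n x)) => sx //.
by rewrite asboolT //; apply: face_incl_simplex.
Qed.

Lemma face_sb n f i : face R 4 n (sbar R \o f) i = sbar R \o face R 4 n f i.
Proof.
apply: funext => x; rewrite /face /=.
by case: (asboolP (stdsimplex R n x)) => sx //; rewrite sbar0.
Qed.

Definition inner {m n} (s : 'rV[R]_n.+2 -> 'rV[R]_m) (t : 'rV[R]_n.+1 -> 'rV[R]_m) : K :=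
  \sum_(i < n.+2) (-1) ^+ i * (if face R m n s i == t then 1 else 0).

Lemma bdry_seq m n (c : ('rV[R]_n.+2 -> 'rV[R]_m) -> K) r t : uniq r ->
  [set s | c s != 0] `<=` [set` r] ->
  bdry R K m n c t = \sum_(s <- r) c s * inner s t.
Proof.
move=> ur sr; rewrite /bdry (fsbig_fwiden r) //.
move=> s [_ /= /negP]; rewrite negbK => /eqP ->.
by rewrite /preimage /= mul0r.
Qed.

Lemma bdry_nrm m n (c : ('rV[R]_n.+2 -> 'rV[R]_m) -> K) t : ~ nrm R t ->
  bdry R K m n c t = 0.
Proof.
move=> nt; rewrite /bdry fsbig1 // => s _; rewrite big1 ?mulr0 // => i _.
case: eqP => [h|]; last by rewrite mulr0.
by exfalso; apply: nt; rewrite -h; apply: face_nrm.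
Qed.

End Bdry.

Section Comm.
Variable R : realType.
Variable K : fieldType.

Lemma inner_Ee n s t : nrm R s ->
  inner R K (Ee R n.+1 s) t + inner R K (sbar R \o Ee R n.+1 s) t
  = inner R K s (Pp R n t) * ind R K n t.
Proof.
move=> ns; rewrite /inner -big_split /= big_distrl /=.
apply: eq_bigr => i _; rewrite face_sb face_Ee -mulrDr sum_ind ?mulrA //.
exact: face_nrm.
Qed.

Lemma bdry_Fc n (d : ('rV[R]_n.+2 -> 'rV[R]_3) -> K) :
  finite_set [set s | d s != 0] -> [set s | d s != 0] `<=` nrm R ->
  bdry R K 4 n (Fc R K n.+1 d) = Fc R K n (bdry R K 3 n d).
Proof.
move=> fd nd; apply: funext => t.
pose r : seq _ := finmap.enum_fset (fset_set [set s | d s != 0]).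
have ur : uniq r by apply: finmap.fset_uniq.
have inr s : (s \in r) = (d s != 0).
  rewrite /r in_fset_set //; apply/idP/idP => [/set_mem //|h]; exact: mem_set.
have nr s : s \in r -> nrm R s by rewrite inr => h; apply: nd.
pose L := map (Ee R n.+1) r ++ map (fun s => sbar R \o Ee R n.+1 s) r.
have uL : uniq L.
  rewrite cat_uniq; apply/and3P; split.
  - rewrite map_inj_in_uniq // => x y xr yr /= h.
    by rewrite -(@PpEe R _ _ (nr _ xr)) h PpEe //; apply: nr.
  - apply/hasPn => x /mapP [s _ ->]; apply/mapP => [[s' _]].
    by move/eqP; rewrite eq_sym (negbTE (Ee_sEe _ _ _ _)).
  - rewrite map_inj_in_uniq // => x y xr yr /= h.
    by rewrite -(@PpsEe R _ _ (nr _ xr)) h PpsEe //; apply: nr.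
rewrite (@bdry_seq R K 4 n _ L) //; last first.
  move=> s /= /Fc_supp [h1 [h2|h2]]; rewrite /L mem_cat; apply/orP.
    by left; apply/mapP; exists (Pp R n.+1 s) => //; rewrite inr.
  by right; apply/mapP; exists (Pp R n.+1 s) => //; rewrite inr.
rewrite /Fc (@bdry_seq R K 3 n _ r) //; last by move=> s /= h; rewrite /= inr.
rewrite big_cat !big_map /= big_distrl /= -big_split /=.
rewrite big_seq [RHS]big_seq; apply: eq_bigr => s sr.
have ns := nr _ sr.
rewrite -/(Fc R K n.+1 d (Ee R n.+1 s)) -/(Fc R K n.+1 d (sbar R \o Ee R n.+1 s)).
by rewrite Fc_Ee // Fc_sEe // -mulrDr inner_Ee // mulrA.
Qed.

End Comm.

Section Sing.
Variable R : realType.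

Lemma sing_Ee n (Y : set 'rV[R]_3) s : Y `<=` S2 R ->
  sing_simplex R 3 n Y s ->
  sing_simplex R 4 n (Xbar R) (Ee R n s) /\
  sing_simplex R 4 n (Xbar R) (sbar R \o Ee R n s).
Proof.
move=> YS [cs ims ns].
have h : {within stdsimplex R n, continuous ((fun w => ext4 R w 1) \o s)}.
  by apply: within_continuous_comp => // y _; apply: ext4_continuous.
have hE : {within stdsimplex R n, continuous (Ee R n s)}.
  apply: (subspace_eq_continuous _ h) => x /set_mem sx.
  by rewrite /Ee /from_subspace /= asboolT.
have imE : Ee R n s @` stdsimplex R n `<=` Xbar R.
  move=> _ [x sx <-]; rewrite /Ee asboolT //; apply: Xbar_ext; last by left.
  by apply: YS; apply: ims; exists x.
split; split => //; first exact: nrm_Ee.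
- by apply: within_continuous_comp => // y _; apply: sbar_continuous.
- move=> _ [x sx <-]; rewrite /= /Ee asboolT // sbar_ext; apply: Xbar_ext; last by right.
  by apply: YS; apply: ims; exists x.
- exact: nrm_sEe.
Qed.

Lemma Xbar_cases n t : sing_simplex R 4 n (Xbar R) t ->
  t = Ee R n (Pp R n t) \/ t = sbar R \o Ee R n (Pp R n t).
Proof.
move=> [ct imt nt].
pose g := (fun y : 'rV[R]_4 => y ord0 3) \o t.
have cg : {within stdsimplex R n, continuous g}.
  by apply: within_continuous_comp => // y _; apply: coord_continuous.
have /connected_intervalP ig := connected_continuous_connected (simplex_connected R n) cg.
have vals x : stdsimplex R n x -> g x = 1 \/ g x = -1.
  by move=> sx; have [] := @Xbar_proj R _ (imt (t x) (ex_intro2 _ _ x sx erefl)).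
have se0 := e0_simplex R n.
have const x : stdsimplex R n x -> g x = g (e0 R n).
  move=> sx; apply: contrapT => neq.
  have [ga gb] : (g @` stdsimplex R n) (-1) /\ (g @` stdsimplex R n) 1.
    case: (vals _ sx) => h; case: (vals _ se0) => h'.
    - by exfalso; apply: neq; rewrite h h'.
    - by split; [exists (e0 R n) | exists x].
    - by split; [exists x | exists (e0 R n)].
    - by exfalso; apply: neq; rewrite h h'.
  have [y sy gy0] := ig _ _ ga gb 0 ltac:(apply/andP; split; lra).
  by case: (vals _ sy); rewrite gy0 => h; lra.
have key x : stdsimplex R n x -> t x = ext4 R (Pp R n t x) (g (e0 R n)).
  move=> sx; rewrite -(const x sx) /Pp asboolT //; exact: ext_proj.
case: (vals _ se0) => h; [left|right]; apply: funext => x;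
  rewrite /Ee /=; (case: (asboolP (stdsimplex R n x)) => sx;
  [rewrite key // h ?sbar_ext // | rewrite nt // ?sbar0 //]).
Qed.

End Sing.

Lemma sum_pick (K : fieldType) (T : eqType) (r : seq T) (f : T -> K) x :
  uniq r -> (x \notin r -> f x = 0) ->
  \sum_(y <- r) f y * (if y == x then 1 else 0) = f x.
Proof.
move=> ur fx; have [xr|xr] := boolP (x \in r).
  rewrite (perm_big _ (perm_to_rem xr)) big_cons eqxx mulr1.
  suff -> : \sum_(y <- rem x r) f y * (if y == x then 1 else 0) = 0 by exact: addr0.
  apply: big1_seq => y /andP[_ yr]; case: eqP => [yx|]; last by rewrite mulr0.
  by move: yr; rewrite yx mem_rem_uniqF.
rewrite fx // big1_seq // => y /andP[_ yr]; case: eqP => [yx|]; last by rewrite mulr0.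
by move: yr; rewrite yx (negbTE xr).
Qed.

Section Main.
Variable R : realType.
Variable K : fieldType.
Variable phi : 'rV[R]_4 -> R.

Lemma Fc_lin n k (a : 'I_k -> K) (cs : 'I_k -> ('rV[R]_n.+1 -> 'rV[R]_3) -> K) :
  Fc R K n (fun t => \sum_(r < k) a r * cs r t) =
  (fun t => \sum_(r < k) a r * Fc R K n (cs r) t).
Proof.
apply: funext => t; rewrite /Fc big_distrl /=.
by apply: eq_bigr => r _; rewrite mulrA.
Qed.

Lemma Fc0 n : Fc R K n (fun _ => 0) = (fun _ => 0).
Proof. by apply: funext => t; rewrite /Fc mul0r. Qed.

Lemma Fc_inj n (x y : ('rV[R]_n.+1 -> 'rV[R]_3) -> K) :
  (forall s, ~ nrm R s -> x s = 0) -> (forall s, ~ nrm R s -> y s = 0) ->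
  Fc R K n x = Fc R K n y -> x = y.
Proof.
move=> nx ny h; apply: funext => s.
case: (pselect (nrm R s)) => ns; last by rewrite nx // ny.
by rewrite -(@Fc_Ee R K n x s ns) h Fc_Ee.
Qed.

End Main.

Section Main2.
Variable R : realType.
Variable K : fieldType.
Variable phi : 'rV[R]_4 -> R.

Lemma phi'_le u w : phi' R phi w <= u ->
  phi (ext4 R w 1) <= u /\ phi (ext4 R w (-1)) <= u.
Proof.
rewrite /phi' ge_max => /andP[h1 h2]; by split.
Qed.

Lemma Fc_fwd n u d : S2_sub R K (phi' R phi) u n d ->
  Cbar_sub R K phi u n (Fc R K n d).
Proof.
move=> [fd sd].
pose Y := S2 R `&` [set x | phi' R phi x <= u].
have YS : Y `<=` S2 R by move=> x [].
have nd s : d s != 0 -> nrm R s by move=> h; case: (sd s h).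
pose r : seq _ := finmap.enum_fset (fset_set [set s | d s != 0]).
have ur : uniq r by apply: finmap.fset_uniq.
have inr s : (s \in r) = (d s != 0).
  by rewrite /r in_fset_set //; apply/idP/idP => [/set_mem //|h]; exact: mem_set.
split; [split|split].
- apply: (@sub_finite_set _ _ (Ee R n @` [set s | d s != 0] `|`
      (fun s => sbar R \o Ee R n s) @` [set s | d s != 0])).
    move=> s /= /Fc_supp [h1 [h2|h2]]; [left|right]; exists (Pp R n s) => //;
      exact/esym.
  by rewrite finite_setU; split; apply: finite_image.
- move=> s /= /Fc_supp [h1 [h2|h2]]; have [a b] := @sing_Ee R _ _ _ YS (sd _ h1);
    by rewrite h2.
- pose x0 : 'rV[R]_n.+1 -> 'rV[R]_3 := fun _ => 0.
  exists (size r), (fun i => d (nth x0 r i)), (fun i => Ee R n (nth x0 r i)).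
  split.
    move=> i; have : nth x0 r i \in r by apply: mem_nth.
    by rewrite inr => h; have [] := @sing_Ee R _ _ _ YS (sd _ h).
  apply: funext => t.
  pose G y := d y * ((if Ee R n y == t then 1 else 0) +
                     (if sbar R \o Ee R n y == t then 1 else 0)).
  have -> : \sum_(i < size r) d (nth x0 r i) *
      ((if Ee R n (nth x0 r i) == t then 1 else 0) +
       (if sbar R \o Ee R n (nth x0 r i) == t then 1 else 0)) =
      \sum_(y <- r) G y by rewrite (big_nth x0) big_mkord.
  rewrite big_seq (eq_bigr (fun y => (d y * (if y == Pp R n t then 1 else 0)) * ind R K n t));
    last by move=> y yr; rewrite /G sum_ind ?mulrA //; apply: nd; rewrite -inr.
  rewrite -big_seq -big_distrl /= sum_pick //.
  by rewrite inr negbK => /eqP.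
- rewrite /phibar; apply: ge_ereal_sup => _ [s /= hs [x sx <-]].
  rewrite lee_fin; have [h1 h2] := @Fc_supp R K _ _ _ hs.
  have [_ ims _] := sd _ h1.
  have [_ /= hu] : Y (Pp R n s x) by apply: ims; exists x.
  have [p1 p2] := phi'_le _ _ hu.
  by case: h2 => ->; rewrite /= /Ee asboolT // ?sbar_ext.
Qed.

End Main2.

Section Main3.
Variable R : realType.
Variable K : fieldType.
Variable phi : 'rV[R]_4 -> R.

Lemma sbar_comp_eq n (f g : 'rV[R]_n.+1 -> 'rV[R]_4) :
  (f == sbar R \o g) = (sbar R \o f == g).
Proof.
apply/eqP/eqP => h; apply: funext => x.
  by rewrite /= h /= sbarK.
by rewrite -h /= sbarK.
Qed.

Lemma sbar_comp_inj n (f g : 'rV[R]_n.+1 -> 'rV[R]_4) :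
  (sbar R \o f == sbar R \o g) = (f == g).
Proof. by rewrite -sbar_comp_eq; congr (_ == _); apply: funext => x /=; rewrite sbarK. Qed.

Lemma Fc_surj n u c : Cbar_sub R K phi u n c ->
  exists d, S2_sub R K (phi' R phi) u n d /\ c = Fc R K n d.
Proof.
move=> [[fc sc] [[p [a [ss [sss ceq]]]] hphi]].
have csym t : c (sbar R \o t) = c t.
  rewrite ceq; apply: eq_bigr => r _; rewrite addrC sbar_comp_inj sbar_comp_eq.
  by [].
have hb s x : c s != 0 -> stdsimplex R n x -> phi (s x) <= u.
  move=> cs sx; rewrite -lee_fin; apply: le_trans hphi.
  by apply: ereal_sup_ubound; exists s => //; exists x.
pose d := fun s : 'rV[R]_n.+1 -> 'rV[R]_3 =>
  if `[< nrm R s >] then c (Ee R n s) else 0.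
have dP s : d s != 0 -> nrm R s /\ c (Ee R n s) != 0.
  by rewrite /d; case: (asboolP (nrm R s)) => //; rewrite eqxx.
exists d; split; last first.
  apply: funext => t; rewrite /Fc /d asboolT; last exact: nrm_Pp.
  have [ct0|ct0] := eqVneq (c t) 0.
    rewrite ct0; have [i0|i0] := eqVneq (ind R K n t) 0; first by rewrite i0 mulr0.
    case: (@ind_cases R K _ _ i0) => h; first by rewrite -h ct0 mul0r.
    by rewrite -csym -h ct0 mul0r.
  have st := sc _ ct0.
  case: (@Xbar_cases R _ _ st) => h.
    have -> : ind R K n t = 1 by rewrite h ind_Ee //; exact: nrm_Pp.
    by rewrite mulr1; exact: (congr1 c h).
  have -> : ind R K n t = 1 by rewrite h ind_sEe //; exact: nrm_Pp.
  by rewrite -[c (Ee R n _)]csym mulr1; exact: (congr1 c h).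
split.
  apply: (@sub_finite_set _ _ (Pp R n @` [set s | c s != 0])); last first.
    exact: finite_image.
  move=> s /= /dP [ns cs]; exists (Ee R n s) => //; exact: PpEe.
move=> s /= /dP [ns cs].
have [cE imE nE] := sc _ cs.
split => //.
- have h : {within stdsimplex R n, continuous (proj3 R \o Ee R n s)}.
    by apply: within_continuous_comp => // y _; apply: proj3_continuous.
  apply: (subspace_eq_continuous _ h) => x /set_mem sx.
  by rewrite /Ee /from_subspace /= asboolT // proj3_ext.
- move=> _ [x sx <-].
  have XE : Xbar R (Ee R n s x) by apply: imE; exists x.
  move: XE; rewrite /Ee asboolT // => XE.
  have [S2x _] := @Xbar_proj R _ XE; rewrite proj3_ext in S2x.
  split => //=; rewrite /phi' ge_max; apply/andP; split.
    by have := hb _ _ cs sx; rewrite /Ee asboolT.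
  have cs' : c (sbar R \o Ee R n s) != 0 by rewrite csym.
  by have := hb _ _ cs' sx; rewrite /Ee /= asboolT // sbar_ext.
Qed.

End Main3.

Lemma cycles_in {R : realType} {K : fieldType} {m} {A : chains_family R K m} {n c} :
  cycles R K m A n c -> A n c.
Proof. by case: n c => [|n] c //= []. Qed.

Lemma S2_sub_nrm {R : realType} {K : fieldType} {f u n d} :
  S2_sub R K f u n d -> forall s, ~ nrm R s -> d s = 0.
Proof.
move=> [_ sd] s ns; apply/eqP; apply: contrapT => /negP h.
by apply: ns; have [] := sd s h.
Qed.

Theorem mainTheorem7 (R : realType) (K : fieldType) (phi : 'rV[R]_4 -> R) :
  {within Xbar R, continuous phi} ->
  forall (n : nat) (u v : R), u < v ->
    pbn_equal R K 4 3 (Cbar_sub R K phi u) (Cbar_sub R K phi v)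
              (S2_sub R K (phi' R phi) u) (S2_sub R K (phi' R phi) v) n.
Proof.
move=> _ n u v _ k; split.
- move=> [cs [cyc hind]].
  have [es hes] := choice (fun r => @Fc_surj R K phi _ _ _ (cycles_in (cyc r))).
  exists es; split.
    move=> r; have [e1 e2] := hes r.
    case: n cs cyc hind es hes e1 e2 => [|n] cs cyc hind es hes e1 e2 //=.
    split => //; apply: (@Fc_inj R K n).
    + exact: bdry_nrm.
    + by [].
    have [_ hb] := cyc r.
    rewrite -bdry_Fc -?e2 ?hb ?Fc0 //; first by case: e1.
    by move=> s /= h; case: (e1.2 s h).
  move=> a [d dB hd].
  apply: hind; exists (Fc R K n.+1 d); first exact: Fc_fwd.
  rewrite bdry_Fc; first by rewrite hd Fc_lin; apply: funext => t;
    apply: eq_bigr => r _; rewrite (hes r).2.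
    by case: dB.
  by move=> s /= h; case: dB => _ /(_ s h) [].
- move=> [cs [cyc hind]].
  exists (fun r => Fc R K n (cs r)); split.
    move=> r; case: n cs cyc hind => [|n] cs cyc hind /=.
      by apply: Fc_fwd; apply: cyc.
    have [e1 e2] := cyc r.
    split; first exact: Fc_fwd.
    rewrite bdry_Fc ?e2 ?Fc0 //; first by case: e1.
    by move=> s /= h; case: e1 => _ /(_ s h) [].
  move=> a [D DB hD].
  have [e [he De]] := @Fc_surj R K phi _ _ _ DB.
  apply: hind; exists e => //.
  apply: (@Fc_inj R K n).
  + exact: bdry_nrm.
  + move=> s ns; apply: big1 => r _.
    by rewrite (S2_sub_nrm (cycles_in (cyc r))) // mulr0.
  rewrite -bdry_Fc -?De ?hD ?Fc_lin //; first by case: he.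
  by move=> s /= h; case: he => _ /(_ s h) [].
Qed.
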